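(* Let $p$ be a prime, $n\in\mathbb{N}$, $G$ a group with $|G|=p^n$, $f\in\mathrm{Aut}(G)$, and suppose $Q=\mathcal{Q}(G,f)$ is a connected quandle. The following are equivalent: (i) $Q$ is simply connected; (ii) $H^2(Q,\mathbb{Z}_p)=\{\mathbf{1}\}$, i.e. every quandle cocycle $\theta:Q\times Q\to\mathbb{Z}_p$ is cohomologous to the trivial cocycle; (iii) $Q$ has no connected cover of size $p^{n+1}$.
   Context: A quandle is a set $Q$ with a binary operation $*$ such that every left translation $L_x:y\mapsto x*y$ is a bijection, $x*(y*z)=(x*y)*(x*z)$ and $x*x=x$. $\mathrm{LMlt}(Q)=\langle L_x:x\in Q\rangle$; $Q$ is connected if $\mathrm{LMlt}(Q)$ is transitive on $Q$. For a group $G$ and $f\in\mathrm{Aut}(G)$, $\mathcal{Q}(G,f)$ is the quandle on $G$ with $x*y=xf(x^{-1}y)$. For a group $K$, a quandle cocycle with values in $K$ is $\theta:Q\times Q\to K$ with $\theta_{x*y,x*z}\theta_{x,z}=\theta_{x,y*z}\theta_{y,z}$ and $\theta_{x,x}=1$; $\theta,\theta'$ are cohomologous if $\theta'_{x,y}=\gamma_{x*y}\theta_{x,y}\gamma_y^{-1}$ for some $\gamma:Q\to K$; the trivial cocycle is constantly $1$. Cocycles with values in $\mathrm{Sym}_S$ ($S$ a set) are defined likewise. A cover of $Q$ is a quandle $E$ with a surjective homomorphism $\pi:E\to Q$ such that $\pi(u)=\pi(v)$ implies $L_u=L_v$ in $E$; it is connected if $E$ is connected, and its size is $|E|$. $Q$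 is simply connected if it is connected and for every set $S$ every quandle cocycle with values in $\mathrm{Sym}_S$ is cohomologous to the trivial one. *)

(* Defs.v *)
From HB Require Import structures.
From mathcomp Require Import all_boot all_order all_algebra all_fingroup.
Set Implicit Arguments. Unset Strict Implicit. Unset Printing Implicit Defensive.
Import GRing.Theory.

(* A quandle structure on a type T, given by the binary operation op
   (op x y = x * y); L_x = op x. *)
Definition is_quandle (T : Type) (op : T -> T -> T) : Prop :=
  [/\ (forall x, bijective (op x)),
      (forall x y z, op x (op y z) = op (op x y) (op x z)) &
      (forall x, op x x = x)].

(* lmlt_orb op a b : b = g a for some g in LMlt = <L_x : x in T>, i.e. g is
   a word in the L_x and their inverses. *)
Inductive lmlt_orb (T : Type) (op : T -> T -> T) (a : T) : T -> Prop :=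
  | lmlt_refl : lmlt_orb op a a
  | lmlt_fwd b x : lmlt_orb op a b -> lmlt_orb op a (op x b)
  | lmlt_bwd b x c : lmlt_orb op a b -> op x c = b -> lmlt_orb op a c.

Definition qconnected (T : Type) (op : T -> T -> T) : Prop :=
  forall a b, lmlt_orb op a b.

(* Quandle cocycle with values in Sym_S (bijections of S, product =
   composition). *)
Definition sym_cocycle (T S : Type) (op : T -> T -> T) (th : T -> T -> S -> S)
  : Prop :=
  [/\ (forall x y, bijective (th x y)),
      (forall x y z, th (op x y) (op x z) \o th x z =1 th x (op y z) \o th y z) &
      (forall x, th x x =1 id)].

(* th is cohomologous to the trivial cocycle:
   th_{x,y} = gamma_{x*y} * 1 * gamma_y^{-1}. *)
Definition sym_cohom_trivial (T S : Type) (op : T -> T -> T)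
  (th : T -> T -> S -> S) : Prop :=
  exists gamma : T -> S -> S,
    (forall y, bijective (gamma y)) /\
    (forall x y, th x y \o gamma y =1 gamma (op x y)).

Definition simply_connected (T : Type) (op : T -> T -> T) : Prop :=
  qconnected op /\
  forall (S : Type) (th : T -> T -> S -> S),
    sym_cocycle op th -> sym_cohom_trivial op th.

Definition ab_cocycle (T : Type) (K : zmodType) (op : T -> T -> T)
  (th : T -> T -> K) : Prop :=
  (forall x y z, (th (op x y) (op x z) + th x z = th x (op y z) + th y z)%R) /\
  (forall x, th x x = 0%R).

Definition ab_cohom_trivial (T : Type) (K : zmodType) (op : T -> T -> T)
  (th : T -> T -> K) : Prop :=
  exists gamma : T -> K, forall x y, th x y = (gamma (op x y) - gamma y)%R.

Definition is_cover (E Q : Type) (opE : E -> E -> E) (op : Q -> Q -> Q)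
  (pi : E -> Q) : Prop :=
  [/\ is_quandle opE,
      (forall q, exists u, pi u = q),
      (forall u v, pi (opE u v) = op (pi u) (pi v)) &
      (forall u v, pi u = pi v -> opE u =1 opE v)].

Definition QGf (gT : finGroupType) (f : gT -> gT) (x y : gT) : gT :=
  (x * f (x^-1 * y))%g.

(* Main.v *)
Require Import Defs.
From HB Require Import structures.
From mathcomp Require Import all_boot all_order all_algebra all_fingroup.
From mathcomp Require Import boolp.
From Stdlib Require Import ClassicalEpsilon Classical.
From mathcomp Require Import ring.
Set Implicit Arguments. Unset Strict Implicit. Unset Printing Implicit Defensive.
From mathcomp Require Import all_solvable.
Import GRing.Theory.

Section Words.
Variables (I T : Type) (L Li : I -> T -> T).

Definition wact (w : seq (I * bool)) (t : T) : T :=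
  foldr (fun l t => if l.2 then L l.1 t else Li l.1 t) t w.

Definition winv (w : seq (I * bool)) : seq (I * bool) :=
  rev (map (fun l => (l.1, ~~ l.2)) w).

Lemma wact_cat w1 w2 t : wact (w1 ++ w2) t = wact w1 (wact w2 t).
Proof. by rewrite /wact foldr_cat. Qed.

Lemma wact_cons l w t : wact (l :: w) t = (if l.2 then L l.1 else Li l.1) (wact w t).
Proof. by case: l => i [] . Qed.

Hypotheses (LK : forall i, cancel (L i) (Li i)) (LiK : forall i, cancel (Li i) (L i)).

Lemma winv_cons l w : winv (l :: w) = winv w ++ [:: (l.1, ~~ l.2)].
Proof. by rewrite /winv /= rev_cons cats1. Qed.

Lemma wactK w : cancel (wact w) (wact (winv w)).
Proof.
elim: w => [|[i b] w IH] t //=.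
rewrite winv_cons wact_cat /=; case: b => /=; by rewrite ?LK ?LiK IH.
Qed.

Lemma wactVK w : cancel (wact (winv w)) (wact w).
Proof.
elim: w => [|[i b] w IH] t //=.
rewrite winv_cons wact_cat /=; case: b => /=; by rewrite IH ?LK ?LiK.
Qed.

Lemma wact_inj w : injective (wact w).
Proof. exact: can_inj (wactK w). Qed.

Lemma wact_nseq_fix i t k : L i t = t -> wact (nseq k (i, false)) t = t.
Proof.
move=> Ht; have Hi : Li i t = t by rewrite -{1}Ht LK.
by elim: k => //= k ->.
Qed.
End Words.

Section WordsMap.
Variables (I T T' : Type) (L Li : I -> T -> T) (L' Li' : I -> T' -> T').
Hypotheses (LK : forall i, cancel (L i) (Li i)) (LiK : forall i, cancel (Li i) (L i)).
Hypotheses (LK' : forall i, cancel (L' i) (Li' i)) (LiK' : forall i, cancel (Li' i) (L' i)).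
Variable pi : T -> T'.
Hypothesis piL : forall i t, pi (L i t) = L' i (pi t).

Lemma piLi i t : pi (Li i t) = Li' i (pi t).
Proof. by rewrite -{2}(LiK i t) piL LK'. Qed.

Lemma pi_wact w t : pi (wact L Li w t) = wact L' Li' w (pi t).
Proof.
elim: w => [|[i b] w IH] //=; case: b => /=; by rewrite ?piL ?piLi IH.
Qed.
End WordsMap.

Section WordsOrb.
Variables (T : Type) (op opi : T -> T -> T).
Hypotheses (LK : forall i, cancel (op i) (opi i)) (LiK : forall i, cancel (opi i) (op i)).

Lemma orb_word a b : lmlt_orb op a b -> exists w, wact op opi w a = b.
Proof.
elim => [|b' x _ [w Hw]|b' x c _ [w Hw] Hc].
- by exists [::].
- by exists ((x, true) :: w); rewrite /= Hw.
- by exists ((x, false) :: w); rewrite /= Hw -Hc LK.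
Qed.
End WordsOrb.

Section WordsOrb2.
Variables (I T : Type) (op : T -> T -> T) (m : I -> T) (Li : I -> T -> T).
Hypotheses (LiK : forall i, cancel (Li i) (op (m i))).
Lemma word_orb w a : lmlt_orb op a (wact (fun i => op (m i)) Li w a).
Proof.
elim: w => [|[i [] ] w IH] /=; first exact: lmlt_refl.
- exact: lmlt_fwd.
- by apply: (lmlt_bwd (x := m i) IH); rewrite LiK.
Qed.
End WordsOrb2.

Section QGf.
Variables (gT : finGroupType) (f : {perm gT}).
Hypothesis hf : f \in Aut [set: gT].
Local Open Scope group_scope.

Lemma fM a b : f (a * b) = f a * f b.
Proof. by move/Aut_morphic/morphicP: hf => H; apply: H; rewrite inE. Qed.

Lemma f1 : f 1 = 1.
Proof. by apply: (mulgI (f 1)); rewrite -fM !mulg1. Qed.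

Lemma fV a : f a^-1 = (f a)^-1.
Proof. by apply: (mulgI (f a)); rewrite -fM !mulgV f1. Qed.

Definition fi : {perm gT} := f^-1.

Lemma fiM a b : fi (a * b) = fi a * fi b.
Proof.
by apply: (can_inj (permK f)); rewrite /fi fM !permKV.
Qed.

Lemma fiV a : fi a^-1 = (fi a)^-1.
Proof. by apply: (can_inj (permK f)); rewrite /fi fV !permKV. Qed.

Definition qop := QGf f.
Definition qinv (x z : gT) : gT := x * fi (x^-1 * z).

Lemma qopK x : cancel (qop x) (qinv x).
Proof. by move=> y; rewrite /qop /QGf /qinv mulKg /fi permK mulKVg. Qed.

Lemma qinvK x : cancel (qinv x) (qop x).
Proof. by move=> y; rewrite /qop /QGf /qinv mulKg /fi permKV mulKVg. Qed.

Lemma qop_id x : qop x x = x.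
Proof. by rewrite /qop /QGf mulVg f1 mulg1. Qed.

Lemma qop_dist x y z : qop x (qop y z) = qop (qop x y) (qop x z).
Proof.
rewrite /qop /QGf !fM !fV ?fM ?fV !invMg ?invgK -!mulgA ?mulKg ?mulKVg.
by [].
Qed.

Lemma qop_lmul g x y : g * qop x y = qop (g * x) (g * y).
Proof. by rewrite /qop /QGf invMg -!mulgA mulKg. Qed.

Lemma qinv_lmul g x y : g * qinv x y = qinv (g * x) (g * y).
Proof. by rewrite /qinv invMg -!mulgA mulKg. Qed.

Notation qact := (wact qop qinv).

Lemma qact_form w : exists h k, forall y, qact w y = h * (f ^+ k) y.
Proof.
elim: w => [|[x [] ] w [h [k IH]]] /=.
- by exists 1, 0 => y; rewrite mul1g expg0 perm1.
- exists (x * f (x^-1 * h)), k.+1 => y.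
  by rewrite IH /qop /QGf expgSr permM mulgA fM mulgA.
- exists (x * fi (x^-1 * h)), (k + #[f].-1) => y.
  rewrite IH /qinv mulgA fiM mulgA; congr (_ * _).
  by rewrite expgD permM -invg_expg.
Qed.

Lemma qact_corr w : exists k, forall y,
  qact (w ++ nseq k (1, false)) y = qact w 1 * y.
Proof.
have [h [k Hw]] := qact_form w.
have fk1 : forall k, (f ^+ k) 1 = 1.
  by elim=> [|j IH]; rewrite ?expg0 ?perm1 // expgSr permM IH f1.
exists k => y; rewrite wact_cat !Hw fk1 mulg1; congr (_ * _).
elim: k {Hw} y => [|k IH] y /=; first by rewrite expg0 perm1.
rewrite expgS permM /qinv invg1 !mul1g.
by rewrite -(IH y) /fi permKV.
Qed.

Lemma qconn_word : qconnected qop -> forall y, exists w, qact w 1 = y.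
Proof. by move=> Hc y; apply: orb_word; [apply: qopK | apply: Hc]. Qed.

End QGf.

Lemma bij_inv (A B : Type) (g : A -> B) : bijective g -> {h | cancel g h /\ cancel h g}.
Proof.
move=> H; apply: constructive_indefinite_description.
by case: H => h h1 h2; exists h.
Qed.

Lemma cid_sig (A : Type) (P : A -> Prop) : (exists x, P x) -> {x | P x}.
Proof. exact: constructive_indefinite_description. Qed.

(* ---------- (i) -> (iii) ---------- *)
Section P1.
Variables (p n : nat) (gT : finGroupType) (f : {perm gT}).
Hypotheses (hp : prime p) (hcard : #|gT| = p ^ n) (hf : f \in Aut [set: gT]).
Hypothesis hconn : qconnected (qop f).

Local Notation qop := (qop f).
Local Notation qinv := (qinv f).
Local Notation qact := (wact qop qinv).

Variables (E : finType) (opE : E -> E -> E) (pi : E -> gT).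
Hypothesis hcov : is_cover opE qop pi.
Hypothesis hEc : qconnected opE.

Let hquan : is_quandle opE. Proof. by case: hcov. Qed.
Let hsurj : forall q, exists u, pi u = q. Proof. by case: hcov. Qed.
Let hhom : forall u v, pi (opE u v) = qop (pi u) (pi v). Proof. by case: hcov. Qed.
Let hfib : forall u v, pi u = pi v -> opE u =1 opE v. Proof. by case: hcov. Qed.
Let hbij : forall u, bijective (opE u). Proof. by case: hquan. Qed.
Let hdist : forall x y z, opE x (opE y z) = opE (opE x y) (opE x z). Proof. by case: hquan. Qed.
Let hidem : forall x, opE x x = x. Proof. by case: hquan. Qed.

Definition opEinv (u : E) : E -> E := sval (bij_inv (hbij u)).
Lemma covEK u : cancel (opE u) (opEinv u). Proof. by rewrite /opEinv; case: (bij_inv _) => h []. Qed.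
Lemma opEinvK u : cancel (opEinv u) (opE u). Proof. by rewrite /opEinv; case: (bij_inv _) => h []. Qed.

Definition ux (x : gT) : E := sval (cid_sig (hsurj x)).
Lemma uxP x : pi (ux x) = x. Proof. exact: svalP (cid_sig (hsurj x)). Qed.

Local Notation LE x := (opE (ux x)).
Local Notation LEi x := (opEinv (ux x)).
Local Notation eact := (wact (fun x => LE x) (fun x => LEi x)).

Lemma pi_eact w e : pi (eact w e) = qact w (pi e).
Proof.
apply: (pi_wact (fun i => opEinvK (ux i)) (qopK f)) => i t.
by rewrite hhom uxP.
Qed.

Definition wq (y : gT) : seq (gT * bool) := sval (cid_sig (qconn_word hconn y)).
Lemma wqP y : qact (wq y) 1%g = y. Proof. exact: svalP (cid_sig (qconn_word hconn y)). Qed.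

Lemma qact_winv_wq y : qact (winv (wq y)) y = 1%g.
Proof. by have := wactK (qopK f) (qinvK f) (wq y) 1%g; rewrite wqP. Qed.

Definition SF := {e : E | pi e == 1%g}.
Definition W y (e : E) := eact (wq y) e.
Definition Wi y (e : E) := eact (winv (wq y)) e.
Lemma WK y : cancel (W y) (Wi y). Proof. exact: (wactK (fun i => covEK (ux i)) (fun i => opEinvK (ux i))). Qed.
Lemma WiK y : cancel (Wi y) (W y). Proof. exact: (wactVK (fun i => covEK (ux i)) (fun i => opEinvK (ux i))). Qed.
Lemma pi_W y e : pi e = 1%g -> pi (W y e) = y.
Proof. by move=> H; rewrite /W pi_eact H wqP. Qed.
Lemma pi_Wi y e : pi e = y -> pi (Wi y e) = 1%g.
Proof. by move=> H; rewrite /Wi pi_eact H qact_winv_wq. Qed.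

Definition bet (x y : gT) (s : SF) : SF := insubd s (Wi (qop x y) (LE x (W y (val s)))).
Definition beti (x y : gT) (s : SF) : SF := insubd s (Wi y (LEi x (W (qop x y) (val s)))).

Lemma betE x y s : val (bet x y s) = Wi (qop x y) (LE x (W y (val s))).
Proof.
rewrite /bet insubdK //; apply/eqP; apply: pi_Wi.
by rewrite hhom uxP pi_W //; apply/eqP; exact: (valP s).
Qed.

Lemma betiE x y s : val (beti x y s) = Wi y (LEi x (W (qop x y) (val s))).
Proof.
rewrite /beti insubdK //; apply/eqP; apply: pi_Wi.
have H1 : pi (W (qop x y) (val s)) = qop x y by apply: pi_W; apply/eqP; exact: (valP s).
have := hhom (ux x) (LEi x (W (qop x y) (val s))).
rewrite opEinvK uxP H1 => /(congr1 (qinv x)); rewrite !qopK => <-.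
done.
Qed.

Lemma LE_comm x y e : LE (qop x y) (LE x e) = LE x (LE y e).
Proof.
rewrite [RHS]hdist (hfib (u := ux (qop x y)) (v := opE (ux x) (ux y))) //.
by rewrite hhom !uxP.
Qed.

Lemma LE_fix x e : pi e = x -> LE x e = e.
Proof. by move=> H; rewrite (hfib (u := ux x) (v := e)) ?uxP ?H // hidem. Qed.

Lemma bet_cocycle : sym_cocycle qop bet.
Proof.
split.
- move=> x y; exists (beti x y) => s; apply: val_inj.
  + by rewrite betiE betE WiK covEK WK.
  + by rewrite betE betiE WiK opEinvK WK.
- move=> x y z s /=; apply: val_inj; rewrite !betE !WiK.
  by rewrite LE_comm -(qop_dist hf).
- move=> x s; apply: val_inj; rewrite betE /=.
  rewrite (qop_id hf) LE_fix ?WK //.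
  by apply: pi_W; apply/eqP; exact: (valP s).
Qed.

Lemma no_cover :
  (forall (S : Type) (th : gT -> gT -> S -> S), sym_cocycle qop th -> sym_cohom_trivial qop th) ->
  #|E| = p ^ n.+1 -> False.
Proof.
move=> Hsc HE.
have [g [_ Hg]] := Hsc SF bet bet_cocycle.
have Hs0 : pi (ux 1%g) == 1%g by rewrite uxP.
pose s0 : SF := Sub (ux 1%g) Hs0.
pose sg y := W y (val (g y s0)).
have Hs x y : LE x (sg y) = sg (qop x y).
  have := Hg x y s0; rewrite /= => /(congr1 val); rewrite betE => H.
  by rewrite /sg -H WiK.
have Hu u y : opE u (sg y) = sg (qop (pi u) y).
  by rewrite (hfib (u := u) (v := ux (pi u))) ?uxP // Hs.
have Hall : forall b, exists y, b = sg y.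
  move=> b; elim: (hEc (sg 1%g) b) => [|b' x _ [y ->]|b' x c _ [y Hy] Hc].
  - by exists 1%g.
  - by exists (qop (pi x) y); exact: Hu.
  - exists (qinv (pi x) y); apply: (can_inj (covEK x)).
    by rewrite Hc Hy Hu qinvK.
have : #|E| <= size (codom sg).
  rewrite cardE; apply: uniq_leq_size; first exact: enum_uniq.
  move=> b _.
  by have [y ->] := Hall b; exact: codom_f.
by rewrite size_codom HE hcard leqNgt ltn_exp2l ?prime_gt1 // ltnSn.
Qed.

End P1.

(* ---------- (iii) -> (ii) : building a cover from a Z_p cocycle ---------- *)
Section P2.
Variables (p n : nat) (gT : finGroupType) (f : {perm gT}).
Hypotheses (hp : prime p) (hcard : #|gT| = p ^ n) (hf : f \in Aut [set: gT]).
Hypothesis hconn : qconnected (qop f).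
Variable th : gT -> gT -> 'Z_p.
Hypothesis hth : ab_cocycle (qop f) th.

Local Notation qop := (qop f).
Local Notation qinv := (qinv f).
Local Notation qact := (wact qop qinv).
Local Notation ET := (gT * 'Z_p)%type.

Definition opE (u v : ET) : ET := (qop u.1 v.1, (v.2 + th u.1 v.1)%R).
Definition opEi (u v : ET) : ET := (qinv u.1 v.1, (v.2 - th u.1 (qinv u.1 v.1))%R).

Lemma opEK u : cancel (opE u) (opEi u).
Proof. by case=> y b; rewrite /opE /opEi /= qopK ?GRing.addrK. Qed.
Lemma opEiK u : cancel (opEi u) (opE u).
Proof. by case=> y b; rewrite /opE /opEi /= qinvK ?GRing.subrK. Qed.

Local Notation eact := (wact (fun x => opE (x, 0%R)) (fun x => opEi (x, 0%R))).

Lemma zeact_fst w e : (eact w e).1 = qact w e.1.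
Proof.
exact: (pi_wact (fun i => opEiK (i,0%R)) (qopK f) (pi := fst) (fun i t => erefl)).
Qed.

Lemma eact_shift w y b : eact w (y, b) = (qact w y, (b + (eact w (y, 0%R)).2)%R).
Proof.
elim: w => [|[x [] ] w IH] /=; first by rewrite GRing.addr0.
- by rewrite IH /opE /= zeact_fst /= GRing.addrA.
- by rewrite IH /opEi /= zeact_fst /= GRing.addrA.
Qed.

Lemma p_gt1 : 1 < p. Proof. exact: prime_gt1. Qed.

Lemma build_cover_conn : ~ ab_cohom_trivial qop th ->
  forall e, exists w, eact w (1%g, 0%R) = e.
Proof.
move=> Hnt.
have wq := qconn_word hconn.
pose wy y := sval (constructive_indefinite_description _ (wq y)).
have wyP y : qact (wy y) 1%g = y := svalP (constructive_indefinite_description _ (wq y)).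
pose G z := (eact (wy z) (1%g, 0%R)).2.
have Ew z : eact (wy z) (1%g, 0%R) = (z, G z).
  by rewrite [LHS]surjective_pairing zeact_fst wyP.
have [w0 [Hw0 Ha]] : exists w0, qact w0 1%g = 1%g /\ (eact w0 (1%g, 0%R)).2 != 0%R.
  apply: NNPP => Hno; apply: Hnt.
  have Hl : forall w, qact w 1%g = 1%g -> (eact w (1%g, 0%R)).2 = 0%R.
    move=> w Hw; apply: NNPP => Hne; apply: Hno; exists w; split=> //; exact/eqP.
  exists (fun y => (eact (wy y) (1%g, 0%R)).2) => x y.
  pose u := winv (wy (qop x y)) ++ ((x, true) :: wy y).
  have Hu : qact u 1%g = 1%g.
    rewrite wact_cat /= wyP.
    by have := wactK (qopK f) (qinvK f) (wy (qop x y)) 1%g; rewrite wyP.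
  have := Hl u Hu.
  have Einv z : (eact (winv (wy z)) (z, 0%R)).2 = (- G z)%R.
    have := wactK (fun i => opEK (i,0%R)) (fun i => opEiK (i,0%R)) (wy z) (1%g, 0%R).
    rewrite Ew eact_shift => /(congr1 snd) /= /eqP.
    by rewrite GRing.addrC GRing.addr_eq0 => /eqP.
  rewrite /u wact_cat /= Ew /opE /= eact_shift Einv /= => H.
  rewrite (_ : th x y = (G y + th x y + - G (qop x y)) + G (qop x y) - G y)%R; last by ring.
  by rewrite H GRing.add0r.
set a := (eact w0 (1%g, 0%R)).2.
have Hw0' : eact w0 (1%g, 0%R) = (1%g, a).
  by rewrite [LHS]surjective_pairing zeact_fst Hw0.
have Hk : forall k, eact (flatten (nseq k w0)) (1%g, 0%R) = (1%g, a *+ k)%R.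
  elim=> [|k IH] /=; first by rewrite GRing.mulr0n.
  by rewrite wact_cat IH eact_shift Hw0 Hw0' /= GRing.mulrS GRing.addrC.
have Hall : forall c : 'Z_p, exists k, c = (a *+ k)%R.
  have Hu : a \is a GRing.unit.
    have -> : a = ((val a)%:R)%R by rewrite natr_Zp.
    rewrite unitZpE ?p_gt1 // prime_coprime //.
    apply/negP => /dvdn_leq Hle.
    have Hlt : val a < p by apply: leq_trans (ltn_ord a) _; rewrite Zp_cast // p_gt1.
    have Ha0 : 0 < val a by rewrite lt0n; apply: contra Ha => /eqP Ha0; apply/eqP/val_inj.
    by move: (Hle Ha0); rewrite leqNgt Hlt.
  move=> c; exists (val (c / a)%R).
  by rewrite -GRing.mulr_natr natr_Zp GRing.mulrC GRing.divrK.
case=> y c; have [k Hck] := Hall (c - G y)%R.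
exists (wy y ++ flatten (nseq k w0)).
by rewrite wact_cat Hk eact_shift wyP -Hck Ew /= GRing.subrK.
Qed.

Lemma opE_id u : opE u u = u.
Proof.
case: u => x a. rewrite /opE /= (qop_id hf).
by case: hth => _ H0; rewrite H0 GRing.addr0.
Qed.

Lemma build_cover : ~ ab_cohom_trivial qop th ->
  exists (E : finType) (opE : E -> E -> E) (pi : E -> gT),
    [/\ is_cover opE qop pi, qconnected opE & #|E| = p ^ n.+1].
Proof.
move=> Hnt; have Hw := build_cover_conn Hnt.
case: hth => Hc H0.
exists (gT * 'Z_p)%type, opE, fst; split.
- split.
  + split.
    * by move=> u; exists (opEi u); [apply: opEK | apply: opEiK].
    * move=> [x a] [y b] [z c]; rewrite /opE /=; congr (_, _).
        by rewrite (qop_dist hf).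
      by rewrite -!GRing.addrA; congr (_ + _)%R; rewrite [RHS]GRing.addrC Hc GRing.addrC.
    * exact: opE_id.
  + by move=> q; exists (q, 0%R).
  + by [].
  + by move=> [x a] [y b] /= ->.
- move=> u v.
  have [wu Hu] := Hw u; have [wv Hv] := Hw v.
  have -> : v = wact (fun x => opE (x, 0%R)) (fun x => opEi (x, 0%R)) (wv ++ winv wu) u.
    by rewrite wact_cat -Hu (wactK (fun i => opEK (i,0%R)) (fun i => opEiK (i,0%R))) ?Hv.
  exact: (word_orb (m := fun x => (x, 0%R)) (fun i => opEiK (i, 0%R))).
- by rewrite card_prod hcard card_ord Zp_cast ?p_gt1 // expnSr.
Qed.
End P2.

(* ---------- linear algebra over F_p in an abelian group ---------- *)
Section LA.
Local Open Scope ring_scope.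
Variables (V : zmodType) (p : nat).
Hypothesis hp : prime p.

Lemma subrACA' (a b c d : V) : (a - b) - (c - d) = (a - c) - (b - d).
Proof. by rewrite !opprB !addrA -!(addrAC _ d) -!(addrAC _ (- c)) (addrAC a). Qed.

Definition subgrp (H : V -> Prop) := H 0 /\ forall a b, H a -> H b -> H (a - b).

Lemma subgrpN H a : subgrp H -> H a -> H (- a).
Proof. by case=> H0 HB Ha; rewrite -sub0r; apply: HB. Qed.

Lemma subgrpD H a b : subgrp H -> H a -> H b -> H (a + b).
Proof. by move=> sH Ha Hb; rewrite -[b]opprK; apply: sH.2 => //; apply: subgrpN. Qed.

Lemma subgrpMn H a k : subgrp H -> H a -> H (a *+ k).
Proof.
move=> sH Ha; elim: k => [|k IH]; first by rewrite mulr0n; case: sH.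
by rewrite mulrS; apply: subgrpD.
Qed.

Lemma subgrpMz H a k : subgrp H -> H a -> H (a *~ k).
Proof.
move=> sH Ha; case: k => k; first by apply: subgrpMn.
by rewrite NegzE mulrNz; apply: subgrpN => //; apply: subgrpMn.
Qed.

Lemma div_lemma H g0 k : subgrp H -> (forall v, H (v *+ p)) -> ~ H g0 ->
  H (g0 *~ k) -> (p%:Z %| k)%Z.
Proof.
move=> sH Hp Hg Hk; apply/negPn/negP => Hnd; apply: Hg.
have : coprimez k p.
  by rewrite coprimezE /= coprime_sym prime_coprime.
case/coprimezP=> [[u v]] /= Huv.
have -> : g0 = (g0 *~ k) *~ u + (g0 *~ v) *+ p.
  by rewrite pmulrn -!mulrzA -mulrzDr (mulrC k u) Huv mulr1z.
by apply: subgrpD => //; apply: subgrpMz.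
Qed.

Fixpoint spanP (gs : seq V) (H : V -> Prop) (v : V) : Prop :=
  if gs is g :: gs' then exists m : int, spanP gs' H (v - g *~ m) else H v.

Lemma spanP_mono gs (H H' : V -> Prop) v : (forall x, H x -> H' x) -> spanP gs H v -> spanP gs H' v.
Proof.
move=> HH; elim: gs v => [|g gs IH] v /=; first exact: HH.
by case=> m Hm; exists m; apply: IH.
Qed.

Lemma spanP_addH gs H v h : subgrp H -> H h -> spanP gs H v -> spanP gs H (v + h).
Proof.
move=> sH Hh; elim: gs v => [|g gs IH] v /=; first by move=> Hv; apply: subgrpD.
case=> m Hm; exists m; rewrite addrAC; exact: IH.
Qed.

Lemma spanP_subgrp gs H : subgrp H -> subgrp (spanP gs H).
Proof.
move=> sH; elim: gs => [|g gs [IH0 IHB]] //=; split.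
- by exists 0; rewrite mulr0z subr0.
- move=> a b [ma Ha] [mb Hb]; exists (ma - mb).
  by rewrite mulrzBr subrACA'; apply: IHB.
Qed.

Lemma spanP_gen gs H g : subgrp H -> g \in gs -> spanP gs H g.
Proof.
move=> sH; elim: gs => [|g' gs IH] //=; rewrite inE => /orP [/eqP ->|Hg].
- by exists 1; rewrite mulr1z subrr; case: (spanP_subgrp gs sH).
- by exists 0; rewrite mulr0z subr0; apply: IH.
Qed.

Lemma greedy gs : forall H g0, subgrp H -> (forall v, H (v *+ p)) -> ~ H g0 ->
  (forall v, exists m, spanP gs H (v - g0 *~ m)) ->
  exists H', [/\ subgrp H', (forall v, H' (v *+ p)), ~ H' g0 &
                 forall v, exists m, H' (v - g0 *~ m)].
Proof.
elim: gs => [|g gs IH] H g0 sH Hp Hg Hsp; first by exists H; split.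
case: (classic (exists h k, H h /\ g0 = h + g *~ k)) => [[h [k [Hh Hgk]]]|Hno].
- (* g lies in H + <g0> *)
  have Hkd : ~~ (p%:Z %| k)%Z.
    apply/negP => /dvdzP [q Hq]; apply: Hg.
    rewrite Hgk Hq mulrzA -pmulrn; apply: subgrpD => //.
  have : coprimez k p.
    by rewrite coprimezE /= coprime_sym prime_coprime.
  case/coprimezP=> [[u v]] /= Huv.
  have Huk : u * k = 1 - v * p%:Z by rewrite -Huv addrK.
  set h' := h *~ u - (g *~ v) *+ p.
  have Hg' : g = g0 *~ u - h'.
    rewrite /h' Hgk mulrzDl -mulrzA (mulrC k u) Huk mulrzBr mulr1z pmulrn -mulrzA.
    by rewrite opprB !addrA subrK [h *~ u + g]addrC addrK.
  have Hh' : H h' by apply: sH.2 => //; apply: subgrpMz.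
  apply: (IH H g0 sH Hp Hg) => v0.
  have [m [m1 Hm]] := Hsp v0.
  exists (m + u * m1).
  have E : v0 - g0 *~ m - g *~ m1 = (v0 - g0 *~ (m + u * m1)) + h' *~ m1.
    rewrite Hg' mulrzBl mulrzDr mulrzA.
    by rewrite opprB opprD !addrA [RHS]addrAC.
  rewrite E in Hm.
  have := spanP_addH sH (subgrpN sH (subgrpMz m1 sH Hh')) Hm.
  by rewrite addrK.
- pose H1 v := exists h k, H h /\ v = h + g *~ k.
  have sH1 : subgrp H1.
    split; first by exists 0, 0; rewrite mulr0z addr0; split=> //; case: sH.
    move=> a b [ha [ka [Ha ->]]] [hb [kb [Hb ->]]].
    exists (ha - hb), (ka - kb); split; first by apply: sH.2.
    by rewrite mulrzBr opprD addrACA.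
  have HH1 : forall x, H x -> H1 x by move=> x Hx; exists x, 0; rewrite mulr0z addr0.
  apply: (IH H1 g0 sH1).
  + by move=> v; apply: HH1.
  + by move=> [h [k [Hh E]]]; apply: Hno; exists h, k.
  + move=> v; have [m [m1 Hm]] := Hsp v; exists m.
    have Hg1 : H1 (g *~ m1) by exists 0, m1; rewrite add0r; split=> //; case: sH.
    have := spanP_addH sH1 Hg1 (spanP_mono HH1 Hm).
    by rewrite subrK.
Qed.

Lemma Zp_dvd0 k : (p%:Z %| k)%Z -> (k%:~R : 'Z_p) = 0.
Proof.
case/dvdzP=> q ->; rewrite intrM.
have -> : ((p%:Z)%:~R : 'Z_p) = p%:R by [].
by rewrite pchar_Zp ?prime_gt1 // mulr0.
Qed.

Lemma functional H g0 : subgrp H -> (forall v, H (v *+ p)) -> ~ H g0 ->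
  (forall v, exists m, H (v - g0 *~ m)) ->
  exists chi : V -> 'Z_p, (forall a b, chi (a + b) = chi a + chi b) /\ chi g0 <> 0.
Proof.
move=> sH Hp Hg Hall.
pose mv v := sval (constructive_indefinite_description _ (Hall v)).
have mvP v : H (v - g0 *~ mv v) := svalP (constructive_indefinite_description _ (Hall v)).
have Huniq v m : H (v - g0 *~ m) -> ((mv v)%:~R : 'Z_p) = m%:~R.
  move=> Hm; apply/eqP; rewrite -subr_eq0 -intrB; apply/eqP; apply: Zp_dvd0.
  apply: (div_lemma sH Hp Hg).
  have := sH.2 _ _ Hm (mvP v).
  by rewrite opprB addrC addrA subrK -mulrzBr.
exists (fun v => ((mv v)%:~R : 'Z_p)); split.
- move=> a b; rewrite -intrD; apply: Huniq.
  have := subgrpD sH (mvP a) (mvP b).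
  by rewrite mulrzDr opprD addrACA.
- rewrite (Huniq g0 1); first by rewrite mulr1z; apply/eqP; rewrite oner_neq0.
  by rewrite mulr1z subrr; case: sH.
Qed.

Lemma spanP_in gs (H H0 : V -> Prop) v : subgrp H -> (forall g, g \in gs -> H g) ->
  (forall x, H0 x -> H x) -> spanP gs H0 v -> H v.
Proof.
move=> sH; elim: gs v => [|g gs IH] v Hgs HH0 /=; first exact: HH0.
case=> m Hm.
have Hgs' : forall g', g' \in gs -> H g' by move=> g' Hg'; apply: Hgs; rewrite inE Hg' orbT.
have := subgrpD sH (IH _ Hgs' HH0 Hm) (subgrpMz m sH (Hgs g (mem_head _ _))).
by rewrite subrK.
Qed.

Lemma LA_main (gs : seq V) K :
  (forall v : V, spanP gs (fun x => x = 0) v) -> (forall v : V, v *+ (p ^ K) = 0) ->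
  (exists v : V, v <> 0) ->
  exists chi : V -> 'Z_p, (forall a b, chi (a + b) = chi a + chi b) /\ exists v, chi v <> 0.
Proof.
move=> Hsp Hexp [v0 Hv0].
pose pV (v : V) := exists w : V, v = w *+ p.
have spV : subgrp pV.
  split; first by exists 0; rewrite mul0rn.
  by move=> a b [wa ->] [wb ->]; exists (wa - wb); rewrite mulrnBl.
have HpV v : pV (v *+ p) by exists v.
case: (classic (exists g0, g0 \in gs /\ ~ pV g0)) => [[g0 [_ Hg0]]|Hno].
- have Hsp0 : forall v, exists m, spanP gs pV (v - g0 *~ m).
    move=> v; exists 0; rewrite mulr0z subr0; apply: spanP_mono (Hsp v) => x ->.
    by exists 0; rewrite mul0rn.
  have [H' [sH' Hp' Hg' Hsp']] := greedy spV HpV Hg0 Hsp0.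
  have [chi [Hadd Hne]] := functional sH' Hp' Hg' Hsp'.
  by exists chi; split=> //; exists g0.
- exfalso; apply: Hv0.
  have HallpV : forall v, pV v.
    move=> v; apply: (spanP_in spV _ _ (Hsp v)).
    + by move=> g Hg; apply: NNPP => Hn; apply: Hno; exists g.
    + by move=> x ->; exists 0; rewrite mul0rn.
  have Hj : forall j (v : V), exists w : V, v = w *+ (p ^ j).
    elim=> [|j IH] v; first by exists v; rewrite expn0 mulr1n.
    have [w Hw] := IH v; have [w' Hw'] := HallpV w.
    by exists w'; rewrite Hw Hw' -mulrnA expnS.
  by have [w ->] := Hj K v0; rewrite Hexp.
Qed.
End LA.

Definition pick_or (A : Type) (d : A) (P : A -> Prop) : A :=
  match excluded_middle_informative (exists a, P a) with
  | left H => sval (constructive_indefinite_description _ H)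
  | right _ => d
  end.

Lemma pick_orP (A : Type) (d : A) (P : A -> Prop) : (exists a, P a) -> P (pick_or d P).
Proof.
move=> H; rewrite /pick_or; case: excluded_middle_informative => // H'.
exact: svalP.
Qed.

(* ---------- (ii) -> (i) : the core ---------- *)
Section P3.
Variables (p n : nat) (gT : finGroupType) (f : {perm gT}).
Hypotheses (hp : prime p) (hcard : #|gT| = p ^ n) (hf : f \in Aut [set: gT]).
Hypothesis hconn : qconnected (qop f).

Local Notation qop := (qop f).
Local Notation qinv := (qinv f).
Local Notation qact := (wact qop qinv).

Variables (S : Type) (bt : gT -> gT -> S -> S).
Hypothesis hbt : sym_cocycle qop bt.

Lemma bt_bij x y : bijective (bt x y). Proof. by case: hbt. Qed.
Lemma bt_coc x y z t : bt (qop x y) (qop x z) (bt x z t) = bt x (qop y z) (bt y z t).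
Proof. by case: hbt => _ H _; exact: H. Qed.
Lemma bt_id x t : bt x x t = t. Proof. by case: hbt => _ _ H; exact: H. Qed.

Definition bti x y := sval (bij_inv (bt_bij x y)).
Lemma btK x y : cancel (bt x y) (bti x y). Proof. by rewrite /bti; case: bij_inv => g []. Qed.
Lemma btiK x y : cancel (bti x y) (bt x y). Proof. by rewrite /bti; case: bij_inv => g []. Qed.

Definition L' (x : gT) (e : gT * S) : gT * S := (qop x e.1, bt x e.1 e.2).
Definition Li' (x : gT) (e : gT * S) : gT * S := (qinv x e.1, bti x (qinv x e.1) e.2).

Lemma L'K x : cancel (L' x) (Li' x).
Proof. by case=> y t; rewrite /L' /Li' /= qopK btK. Qed.
Lemma Li'K x : cancel (Li' x) (L' x).
Proof. by case=> y t; rewrite /L' /Li' /= qinvK btiK. Qed.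

Local Notation eact := (wact L' Li').

Lemma eact_fst w e : (eact w e).1 = qact w e.1.
Proof. exact: (pi_wact Li'K (qopK f) (pi := fst) (fun i t => erefl)). Qed.

Lemma L'_dist x y e : L' x (L' y e) = L' (qop x y) (L' x e).
Proof. by case: e => z t; rewrite /L' /= (qop_dist hf) bt_coc. Qed.

Lemma L'_fix x t : L' x (x, t) = (x, t).
Proof. by rewrite /L' /= (qop_id hf) bt_id. Qed.

Lemma Li'_L' z x e : Li' z (L' x e) = L' (qinv z x) (Li' z e).
Proof.
apply: (can_inj (L'K z)); rewrite Li'K L'_dist Li'K.
by rewrite qinvK.
Qed.

Lemma eact_L' w x e : eact w (L' x e) = L' (qact w x) (eact w e).
Proof.
elim: w => [|[z [] ] w IH] //=; rewrite IH.
- by rewrite L'_dist.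
- by rewrite Li'_L'.
Qed.

Lemma eact_Li' w x e : eact w (Li' x e) = Li' (qact w x) (eact w e).
Proof.
apply: (can_inj (L'K (qact w x))); rewrite Li'K -eact_L'.
by rewrite Li'K.
Qed.

Definition triv (w : seq (gT * bool)) := forall y, qact w y = y.

Lemma triv_comm w : triv w -> forall h e, eact w (eact h e) = eact h (eact w e).
Proof.
move=> Hw h e; elim: h => [|[z [] ] h IH] //=.
- by rewrite eact_L' Hw IH.
- by rewrite eact_Li' Hw IH.
Qed.

Lemma triv_cat w1 w2 : triv w1 -> triv w2 -> triv (w1 ++ w2).
Proof. by move=> H1 H2 y; rewrite wact_cat H2 H1. Qed.

Lemma triv_winv w : triv w -> triv (winv w).
Proof.
move=> Hw y; rewrite -{1}(Hw y).
exact: (wactK (qopK f) (qinvK f)).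
Qed.

Lemma eK w : cancel (eact w) (eact (winv w)). Proof. exact: (wactK L'K Li'K). Qed.
Lemma eVK w : cancel (eact (winv w)) (eact w). Proof. exact: (wactVK L'K Li'K). Qed.
Lemma qK w : cancel (qact w) (qact (winv w)). Proof. exact: (wactK (qopK f) (qinvK f)). Qed.
Lemma qVK w : cancel (qact (winv w)) (qact w). Proof. exact: (wactVK (qopK f) (qinvK f)). Qed.

Variable s0 : S.
Definition e0 : gT * S := (1%g, s0).

Lemma L'e0 : L' 1%g e0 = e0. Proof. exact: L'_fix. Qed.

Definition inC (c : gT * S) := exists w, eact w e0 = c.
Definition inF (s : S) := inC (1%g, s).

Definition N := {s : S | inF s}.
HB.instance Definition _ := gen_eqMixin N.
HB.instance Definition _ := gen_choiceMixin N.

Lemma eact_e0_fst w : qact w 1%g = 1%g -> eact w e0 = (1%g, (eact w e0).2).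
Proof. by move=> H; rewrite [LHS]surjective_pairing eact_fst /= H. Qed.

Lemma inF_fst w : qact w 1%g = 1%g -> inF (eact w e0).2.
Proof. by move=> H; exists w; rewrite -eact_e0_fst. Qed.

Definition mkN w (Hw : qact w 1%g = 1%g) : N := exist _ (eact w e0).2 (inF_fst Hw).
Definition rho (a : N) : gT * S := (1%g, sval a).

Lemma rho_mkN w Hw : rho (@mkN w Hw) = eact w e0.
Proof. by rewrite /rho /= -eact_e0_fst. Qed.

Lemma rho_inj : injective rho.
Proof.
move=> a b [] H; case: a b H => [a Ha] [b Hb] /= H; subst b.
by rewrite (Prop_irrelevance Ha Hb).
Qed.

Lemma tw_ex (a : N) : exists t, triv t /\ eact t e0 = rho a.
Proof.
case: a => s [w Hw] /=.
have H1 : qact w 1%g = 1%g by have := congr1 fst Hw; rewrite eact_fst.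
have [k Hk] := qact_corr hf w.
exists (w ++ nseq k (1%g, false)); split.
- by move=> y; rewrite Hk H1 mul1g.
- by rewrite wact_cat (wact_nseq_fix L'K) ?L'e0 // Hw.
Qed.

Definition tw (a : N) := sval (cid_sig (tw_ex a)).
Lemma tw_triv a : triv (tw a). Proof. exact: (svalP (cid_sig (tw_ex a))).1. Qed.
Lemma tw_e0 a : eact (tw a) e0 = rho a. Proof. exact: (svalP (cid_sig (tw_ex a))).2. Qed.

Definition D (a : N) := eact (tw a).

Lemma triv1 w : triv w -> qact w 1%g = 1%g. Proof. by move=> H; apply: H. Qed.

Definition Nzero : N := @mkN [::] erefl.
Definition Nadd (a b : N) : N := @mkN (tw a ++ tw b) (triv1 (triv_cat (tw_triv a) (tw_triv b))).
Definition Nopp (a : N) : N := @mkN (winv (tw a)) (triv1 (triv_winv (tw_triv a))).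

Lemma rho0 : rho Nzero = e0. Proof. by rewrite rho_mkN. Qed.
Lemma rhoD a b : rho (Nadd a b) = D a (rho b).
Proof. by rewrite rho_mkN wact_cat tw_e0. Qed.
Lemma rhoN a : rho (Nopp a) = eact (winv (tw a)) e0.
Proof. by rewrite rho_mkN. Qed.

Lemma DC a b e : D a (D b e) = D b (D a e).
Proof. by rewrite /D (triv_comm (tw_triv a)). Qed.

Lemma NaddA : associative Nadd.
Proof.
move=> a b c; apply: rho_inj; rewrite !rhoD.
rewrite -(tw_e0 c) /D (triv_comm (tw_triv (Nadd a b))) (tw_e0 (Nadd a b)) rhoD -(tw_e0 b) /D.
by rewrite [in LHS](triv_comm (tw_triv b)) [in LHS](triv_comm (tw_triv a)).
Qed.

Lemma NaddC : commutative Nadd.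
Proof.
move=> a b; apply: rho_inj; rewrite !rhoD -(tw_e0 a) -(tw_e0 b) /D.
by rewrite (triv_comm (tw_triv a)).
Qed.

Lemma Nadd0 : left_id Nzero Nadd.
Proof.
move=> b; apply: rho_inj; rewrite rhoD -(tw_e0 b) /D.
by rewrite (triv_comm (tw_triv Nzero)) tw_e0 rho0.
Qed.

Lemma NaddN : left_inverse Nzero Nopp Nadd.
Proof.
move=> a; apply: rho_inj; rewrite rhoD rho0 -(tw_e0 a).
by rewrite /D (triv_comm (tw_triv (Nopp a))) tw_e0 rhoN eVK.
Qed.

HB.instance Definition _ := GRing.isZmodule.Build N NaddA NaddC Nadd0 NaddN.


Definition wq0 y := sval (cid_sig (qconn_word hconn y)).
Lemma wq0P y : qact (wq0 y) 1%g = y. Proof. exact: svalP (cid_sig (qconn_word hconn y)). Qed.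
Definition cy y := eact (wq0 y) e0.
Lemma cy_fst y : (cy y).1 = y. Proof. by rewrite eact_fst wq0P. Qed.
Lemma cy_pair y : cy y = (y, (cy y).2). Proof. by rewrite [LHS]surjective_pairing cy_fst. Qed.

Lemma inC_eact w c : inC c -> inC (eact w c).
Proof. by case=> h <-; exists (w ++ h); rewrite wact_cat. Qed.
Lemma inC_e0 : inC e0. Proof. by exists [::]. Qed.
Lemma inC_cy y : inC (cy y). Proof. exact: inC_eact inC_e0. Qed.
Lemma inC_L' x c : inC c -> inC (L' x c).
Proof. by case=> h <-; exists ((x, true) :: h). Qed.
Lemma inC_Li' x c : inC c -> inC (Li' x c).
Proof. by case=> h <-; exists ((x, false) :: h). Qed.
Lemma inC_D a c : inC c -> inC (D a c). Proof. exact: inC_eact. Qed.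

Lemma D_eact a h : D a (eact h e0) = eact h (rho a).
Proof. by rewrite /D (triv_comm (tw_triv a)) tw_e0. Qed.
Lemma D_fst a e : (D a e).1 = e.1. Proof. by rewrite eact_fst (tw_triv a). Qed.
Lemma D_L' a x e : D a (L' x e) = L' x (D a e).
Proof. by rewrite /D eact_L' (tw_triv a). Qed.
Lemma D_Li' a x e : D a (Li' x e) = Li' x (D a e).
Proof. by rewrite /D eact_Li' (tw_triv a). Qed.
Lemma D_act a w e : D a (eact w e) = eact w (D a e).
Proof. by rewrite /D (triv_comm (tw_triv a)). Qed.

Lemma free a b c : inC c -> D a c = D b c -> a = b.
Proof.
case=> h <-; rewrite !D_eact => H; apply: rho_inj.
exact: (wact_inj L'K Li'K H).
Qed.

Definition kap (c : gT * S) : N := pick_or 0%R (fun a => D a (cy c.1) = c).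

Lemma kap_spec c : inC c -> D (kap c) (cy c.1) = c.
Proof.
move=> Hc; apply (@pick_orP N 0%R (fun a => D a (cy c.1) = c)); case: Hc => h Hh.
set y := c.1.
have Hy : qact h 1%g = y by rewrite /y -Hh eact_fst.
have Hu : qact (winv (wq0 y) ++ h) 1%g = 1%g.
  by rewrite wact_cat Hy; have := qK (wq0 y) 1%g; rewrite wq0P.
exists (mkN Hu).
by rewrite /cy D_eact rho_mkN wact_cat Hh eVK.
Qed.

Lemma rho0' : rho 0%R = e0. Proof. exact: rho0. Qed.

Lemma D0 c : inC c -> D 0%R c = c.
Proof. by case=> h <-; rewrite D_eact rho0'. Qed.

Lemma DD a b c : inC c -> D a (D b c) = D (a + b)%R c.
Proof.
case=> h <-; rewrite !D_eact D_act.
have -> : rho (a + b)%R = D a (rho b) by exact (rhoD a b).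
by rewrite -(tw_e0 b).
Qed.

Lemma kap_D a y : kap (D a (cy y)) = a.
Proof.
have Hc : inC (D a (cy y)) by apply: inC_D; apply: inC_cy.
have := kap_spec Hc; rewrite D_fst cy_fst => H.
apply: (free (inC_cy y)); exact: H.
Qed.

Lemma kap_Dc a c : inC c -> kap (D a c) = (a + kap c)%R.
Proof. by move=> Hc; rewrite -{1}(kap_spec Hc) DD ?kap_D //; apply: inC_cy. Qed.

Definition nu x y := kap (L' x (cy y)).

Lemma L'_cy x y : L' x (cy y) = D (nu x y) (cy (qop x y)).
Proof.
have := kap_spec (inC_L' x (inC_cy y)).
by rewrite /= cy_fst.
Qed.

Lemma kap_L' x c : inC c -> kap (L' x c) = (kap c + nu x c.1)%R.
Proof.
move=> Hc; rewrite -{1}(kap_spec Hc) -D_L' L'_cy DD ?kap_D //; apply: inC_cy.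
Qed.

Lemma nu_coc x y z : (nu (qop x y) (qop x z) + nu x z = nu x (qop y z) + nu y z)%R.
Proof.
have H1 := kap_L' x (inC_L' y (inC_cy z)).
have H2 := kap_L' (qop x y) (inC_L' x (inC_cy z)).
rewrite -L'_dist H1 /= !cy_fst in H2.
rewrite /nu in H2 *.
by rewrite addrC -H2 addrC.
Qed.

Lemma nu_id x : nu x x = 0%R.
Proof.
rewrite /nu {1}cy_pair L'_fix -cy_pair.
by rewrite -{1}(D0 (inC_cy x)) kap_D.
Qed.


Local Open Scope ring_scope.

Definition kk g := sval (cid_sig (qact_corr hf (wq0 g))).
Definition lw g := wq0 g ++ nseq (kk g) (1%g, false).
Lemma lwP g y : qact (lw g) y = (g * y)%g.
Proof. by rewrite /lw (svalP (cid_sig (qact_corr hf (wq0 g)))) wq0P. Qed.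

Definition Gam c := \sum_(g : gT) kap (eact (lw g) c).
Definition nuG x y := \sum_(g : gT) nu (g * x)%g (g * y)%g.

Lemma Gam_L' x c : inC c -> Gam (L' x c) = Gam c + nuG x c.1.
Proof.
move=> Hc; rewrite /Gam /nuG -big_split; apply: eq_bigr => g _ /=.
by rewrite eact_L' lwP kap_L' ?(eact_fst (lw g) c) ?lwP //; apply: inC_eact.
Qed.

Lemma Gam_D a c : inC c -> Gam (D a c) = Gam c + a *+ #|gT|.
Proof.
move=> Hc; rewrite /Gam.
have -> : \sum_(g : gT) kap (eact (lw g) (D a c)) = \sum_(g : gT) (a + kap (eact (lw g) c)).
  by apply: eq_bigr => g _; rewrite -D_act kap_Dc //; apply: inC_eact.
by rewrite big_split /= sumr_const addrC.
Qed.


Lemma nuG_inv h x y : nuG (h * x)%g (h * y)%g = nuG x y.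
Proof.
rewrite /nuG [RHS](reindex_inj (mulIg h)) /=; apply: eq_bigr => g _.
by rewrite !mulgA.
Qed.

Lemma nuG_coc x y z : nuG (qop x y) (qop x z) + nuG x z = nuG x (qop y z) + nuG y z.
Proof.
rewrite /nuG -!big_split; apply: eq_bigr => g _ /=.
by rewrite !qop_lmul nu_coc.
Qed.

Lemma nuG_id x : nuG x x = 0.
Proof. by rewrite /nuG big1 // => g _; rewrite nu_id. Qed.

Definition psi w := nuG 1%g w.

Lemma nuG_psi x y : nuG x y = psi (x^-1 * y)%g.
Proof. by rewrite /psi -(nuG_inv x^-1) mulVg. Qed.

Lemma psi1 : psi 1%g = 0. Proof. exact: nuG_id. Qed.

Lemma psi_ident y w : psi (f w) + psi (y * w)%g = psi (y * f w)%g + psi w.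
Proof.
have := nuG_coc 1%g y (y * w)%g; rewrite !nuG_psi.
rewrite /qop /QGf !invg1 !mul1g !mulKg (fM hf) mulKg.
by [].
Qed.

Definition Hpred h := forall t, psi (t * h)%g = psi t + psi h.

Lemma Hpred_w w : Hpred (w^-1 * f w)%g.
Proof.
have H1 t : psi (t * (w^-1 * f w))%g = psi (f w) + psi t - psi w.
  have := psi_ident (t * w^-1)%g w; rewrite mulgKV -!mulgA => ->.
  by rewrite addrK.
have H2 : psi (w^-1 * f w)%g = psi (f w) - psi w.
  by rewrite -(mul1g (w^-1 * f w)%g) H1 psi1 addr0.
by move=> t; rewrite H1 H2 addrA (addrC (psi (f w))).
Qed.


Lemma Hpred_f h : Hpred h -> Hpred (f h).
Proof.
move=> Hh t; have := psi_ident t h; rewrite Hh => E.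
apply: (addIr (psi h)); rewrite -E.
by rewrite addrA (addrC (psi t)).
Qed.

Lemma Hpred_fV h : Hpred (f h) -> Hpred h.
Proof.
move=> Hh t; have := psi_ident t h; rewrite Hh => E.
apply: (addrI (psi (f h))); rewrite E.
by rewrite addrA (addrC (psi (f h))).
Qed.

Lemma HpredM a b : Hpred a -> Hpred b -> Hpred (a * b)%g.
Proof.
move=> Ha Hb t; rewrite mulgA (Hb (t * a)%g) (Hb a) Ha.
by rewrite addrA.
Qed.

Lemma psi_1 : Hpred 1%g. Proof. by move=> t; rewrite mulg1 psi1 addr0. Qed.

Lemma HpredV a : Hpred a -> Hpred a^-1%g.
Proof.
move=> Ha t.
have E1 t' : psi (t' * a^-1)%g = psi t' - psi a.
  by apply: (addIr (psi a)); rewrite -Ha mulgKV subrK.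
have E2 : psi a^-1%g = - psi a by rewrite -(mul1g a^-1%g) E1 psi1 sub0r.
by rewrite E1 E2.
Qed.

Lemma Hpred_all y : Hpred y.
Proof.
elim: (hconn 1%g y) => [|b x _ Hb|b x c _ Hb Hc].
- exact: psi_1.
- have -> : qop x b = (((x^-1)^-1 * f x^-1) * f b)%g :> gT by rewrite /qop /QGf (fM hf) mulgA invgK.
  by apply: HpredM; [apply: Hpred_w | apply: Hpred_f].
- apply: Hpred_fV.
  have -> : f c = (((x^-1)^-1 * f x^-1)^-1 * b)%g :> gT.
    by rewrite -Hc /qop /QGf (fM hf) invgK (mulgA x) mulKg.
  by apply: HpredM => //; apply: HpredV; apply: Hpred_w.
Qed.

Lemma psiM a b : psi (a * b)%g = psi a + psi b. Proof. exact: Hpred_all. Qed.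

Lemma psiX a k : psi (a ^+ k)%g = psi a *+ k.
Proof. by elim: k => [|k IH]; rewrite ?expg0 ?psi1 // expgS psiM IH mulrS. Qed.

Lemma psi_exp a : psi a *+ #|gT| = 0.
Proof. by rewrite -psiX -cardsT expg_cardG ?in_setT // psi1. Qed.

Lemma nuG_exp x y : nuG x y *+ #|gT| = 0.
Proof. by rewrite nuG_psi psi_exp. Qed.

Definition Om c := Gam c *+ #|gT|.

Lemma Om_L' x c : inC c -> Om (L' x c) = Om c.
Proof. by move=> Hc; rewrite /Om Gam_L' // mulrnDl nuG_exp addr0. Qed.

Lemma Om_Li' x c : inC c -> Om (Li' x c) = Om c.
Proof. by move=> Hc; rewrite -[in RHS](Li'K x c) Om_L' //; apply: inC_Li'. Qed.

Lemma Om_act w : Om (eact w e0) = Om e0.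
Proof.
elim: w => [|[x [] ] w IH] //=.
- by rewrite Om_L' //; exists w.
- by rewrite Om_Li' //; exists w.
Qed.

Lemma N_exp (a : N) : a *+ (p ^ (n + n)) = 0.
Proof.
have H := Om_act (tw a).
have HD : Gam (D a e0) = Gam e0 + a *+ #|gT| := Gam_D a inC_e0.
rewrite /Om -/(D a e0) HD mulrnDl in H.
apply: (addrI (Gam e0 *+ #|gT|)); rewrite addr0 expnD -hcard mulrnA.
exact: H.
Qed.


Definition gs : seq N := codom (fun i : gT * gT => nu i.1 i.2).
Lemma nu_in_gs x y : nu x y \in gs.
Proof. exact: (codom_f (fun i : gT * gT => nu i.1 i.2) (x, y)). Qed.

Definition SP := spanP gs (fun v : N => v = 0).
Lemma sub0 : subgrp (fun v : N => v = 0).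
Proof. by split=> // a b -> ->; rewrite subrr. Qed.
Lemma sSP : subgrp SP. Proof. exact: spanP_subgrp sub0. Qed.

Lemma SP_kap w : SP (kap (eact w e0) - kap e0).
Proof.
elim: w => [|[x [] ] w IH] /=.
- by rewrite subrr; case: sSP.
- rewrite kap_L'; last by exists w.
  rewrite addrAC; apply: subgrpD; first exact: sSP.
    exact: IH.
  exact: spanP_gen sub0 (nu_in_gs _ _).
- have Hc : inC (Li' x (eact w e0)) by exists ((x, false) :: w).
  have E := kap_L' x Hc; rewrite Li'K in E.
  have -> : kap (Li' x (eact w e0)) = kap (eact w e0) - nu x (Li' x (eact w e0)).1.
    by rewrite E addrK.
  rewrite addrAC; apply: sSP.2; first exact: IH.
  exact: spanP_gen sub0 (nu_in_gs _ _).
Qed.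

Lemma span_all (a : N) : SP a.
Proof.
have := SP_kap (tw a); rewrite -/(D a e0) (kap_Dc _ inC_e0).
by rewrite addrK.
Qed.

Lemma KEY :
  (forall th : gT -> gT -> 'Z_p, ab_cocycle qop th -> ab_cohom_trivial qop th) ->
  forall w, qact w 1%g = 1%g -> (eact w e0).2 = s0.
Proof.
move=> HZ w Hw; apply: NNPP => Hne.
pose a := mkN Hw.
have Ha : a <> 0.
  move=> Ha0; apply: Hne; have := congr1 rho Ha0.
  by rewrite rho_mkN rho0' => ->.
have [chi [Hadd [v Hv]]] := LA_main hp span_all N_exp (ex_intro _ a Ha).
have chi0 : chi 0 = 0.
  by apply: (addrI (chi 0)); rewrite -Hadd !addr0.
pose th x y := chi (nu x y).
have Hth : ab_cocycle qop th.
  split=> [x y z|x]; rewrite /th.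
  - by rewrite -!Hadd nu_coc.
  - by rewrite nu_id chi0.
have [gam Hgam] := HZ th Hth.
pose Phi c := chi (kap c) - gam c.1.
have Phi_L' x c : inC c -> Phi (L' x c) = Phi c.
  move=> Hc; rewrite /Phi kap_L' // Hadd -/(th x c.1) Hgam /=.
  by rewrite addrA addrAC addrK.
have Phi_Li' x c : inC c -> Phi (Li' x c) = Phi c.
  by move=> Hc; rewrite -[in RHS](Li'K x c) Phi_L' //; apply: inC_Li'.
have Phi_act w' : Phi (eact w' e0) = Phi e0.
  elim: w' => [|[x [] ] w' IH] //=.
  - by rewrite Phi_L' //; exists w'.
  - by rewrite Phi_Li' //; exists w'.
have := Phi_act (tw v); rewrite -/(D v e0) /Phi (kap_Dc _ inC_e0) D_fst Hadd.
move/eqP; rewrite -addrA -subr_eq0 addrK => /eqP.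
exact: Hv.
Qed.

End P3.

Section P3fin.
Variables (p n : nat) (gT : finGroupType) (f : {perm gT}).
Hypotheses (hp : prime p) (hcard : #|gT| = p ^ n) (hf : f \in Aut [set: gT]).
Hypothesis hconn : qconnected (qop f).
Local Notation qop := (qop f).
Local Notation qinv := (qinv f).
Local Notation qact := (wact qop qinv).
Hypothesis HZ : forall th : gT -> gT -> 'Z_p, ab_cocycle qop th -> ab_cohom_trivial qop th.

Lemma ii_i (S : Type) (bt : gT -> gT -> S -> S) :
  sym_cocycle qop bt -> sym_cohom_trivial qop bt.
Proof.
move=> hbt.
pose eact := wact (L' f bt) (Li' hbt).
have eK w : cancel (eact w) (eact (winv w)) := wactK (L'K hbt) (Li'K hbt) w.
have eVK w : cancel (eact (winv w)) (eact w) := wactVK (L'K hbt) (Li'K hbt) w.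
have qK w : cancel (qact w) (qact (winv w)) := wactK (qopK f) (qinvK f) w.
pose wy := wq0 hconn.
have Hkey s w : qact w 1%g = 1%g -> eact w (1%g, s) = (1%g, s).
  move=> Hw; rewrite [LHS]surjective_pairing (eact_fst hbt) Hw /=; congr pair.
  exact: (KEY hp hcard hf hconn hbt s HZ Hw).
pose gam y s := (eact (wy y) (1%g, s)).2.
have Efst y s : eact (wy y) (1%g, s) = (y, gam y s).
  by rewrite [LHS]surjective_pairing (eact_fst hbt) wq0P.
have Hinv y : qact (winv (wy y)) y = 1%g by have := qK (wy y) 1%g; rewrite wq0P.
exists gam; split.
- move=> y; exists (fun t => (eact (winv (wy y)) (y, t)).2).
  + by move=> s; rewrite /= -Efst eK.
  + move=> t /=.
    have E : eact (winv (wy y)) (y, t) = (1%g, (eact (winv (wy y)) (y, t)).2).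
      by rewrite [LHS]surjective_pairing (eact_fst hbt) /= Hinv.
    by rewrite /gam -E eVK.
- move=> x y s /=.
  have H1 : L' f bt x (eact (wy y) (1%g, s)) = (qop x y, bt x y (gam y s)) by rewrite Efst.
  pose u := winv (wy (qop x y)) ++ ((x, true) :: wy y).
  have Hu : qact u 1%g = 1%g by rewrite /u wact_cat /= wq0P Hinv.
  have := Hkey s u Hu; rewrite /u /eact wact_cat /= -/eact H1 => E.
  have := congr1 (eact (wy (qop x y))) E; rewrite eVK Efst.
  by case.
Qed.
End P3fin.

Theorem theorem3p12 (p n : nat) (gT : finGroupType) (f : {perm gT}) :
  prime p ->
  #|gT| = p ^ n ->
  f \in Aut [set: gT] ->
  qconnected (QGf f) ->
  [<-> simply_connected (QGf f);
       forall th : gT -> gT -> 'Z_p,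
         ab_cocycle (QGf f) th -> ab_cohom_trivial (QGf f) th;
       ~ exists (E : finType) (opE : E -> E -> E) (pi : E -> gT),
           [/\ is_cover opE (QGf f) pi, qconnected opE & #|E| = p ^ n.+1]].
Proof.
move=> hp hcard hf hconn.
have I_III : simply_connected (QGf f) -> ~ exists (E : finType) (opE : E -> E -> E) (pi : E -> gT),
    [/\ is_cover opE (QGf f) pi, qconnected opE & #|E| = p ^ n.+1].
  move=> [_ Hsc] [E [opE [pi [Hcov HEc HE]]]].
  exact: (no_cover hp hcard hf hconn Hcov HEc Hsc HE).
have III_II : (~ exists (E : finType) (opE : E -> E -> E) (pi : E -> gT),
    [/\ is_cover opE (QGf f) pi, qconnected opE & #|E| = p ^ n.+1]) ->
    forall th : gT -> gT -> 'Z_p, ab_cocycle (QGf f) th -> ab_cohom_trivial (QGf f) th.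
  move=> Hno th Hth; apply: NNPP => Hnt; apply: Hno.
  exact: (build_cover hp hcard hf hconn Hth Hnt).
have II_I : (forall th : gT -> gT -> 'Z_p, ab_cocycle (QGf f) th -> ab_cohom_trivial (QGf f) th) ->
    simply_connected (QGf f).
  move=> HZ; split=> //.
  move=> S bt hbt; exact: (ii_i hp hcard hf hconn HZ hbt).
tfae=> H.
- exact: III_II (I_III H).
- exact: I_III (II_I H).
- exact: II_I (III_II H).
Qed.
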